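(* Let $1 \le p < \infty$. Then $J_n$ is the unique Chebyshev center of $\Omega_n$ relative to the metric space $(\Omega_n,\|\cdot\|_{\mathcal{S}_p})$ (i.e. the unique $D\in\Omega_n$ minimizing $\sup_{B\in\Omega_n}\|D-B\|_{\mathcal{S}_p}$), and the corresponding Chebyshev radius is $$ \inf_{D\in \Omega_n}\sup_{B\in\Omega_n}\|D-B\|_{\mathcal{S}_p} = (n-1)^{1/p}. $$
   Context: $\Omega_n$ denotes the set of $n\times n$ doubly stochastic matrices (nonnegative real entries, all row and column sums equal to $1$). $J_n$ is the $n\times n$ matrix with all entries equal to $1/n$. For $p\ge1$, $\|A\|_{\mathcal{S}_p} := \big(\sum_{i=1}^n\sigma_i(A)^p\big)^{1/p}$ where $\sigma_i(A)$ are the singular values of $A$. Given a constraint set $\mathcal{R}\subseteq M_n(\mathbb{R})$ and a norm, the Chebyshev radius of $\Omega_n$ is $\inf_{A\in\mathcal{R}}\sup_{B\in\Omega_n}\|A-B\|$ and a Chebyshev center is any $A\in\mathcal{R}$ attaining this infimum; ''relative to the metric space $(\Omega_n,\|\cdot\|)$'' means $\mathcal{R}=\Omega_n$. *)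

(* Defs.v *)
From HB Require Import structures.
From mathcomp Require Import all_boot all_order all_algebra.
From mathcomp Require Import all_classical all_reals all_analysis.
Set Implicit Arguments. Unset Strict Implicit. Unset Printing Implicit Defensive.
Import Order.TTheory GRing.Theory Num.Theory.
Local Open Scope ring_scope.
Local Open Scope classical_set_scope.

Definition doubly_stochastic {R : realType} (n : nat) (A : 'M[R]_n) : Prop :=
  (forall i j, 0 <= A i j) /\
  (forall i, \sum_(j < n) A i j = 1) /\
  (forall j, \sum_(i < n) A i j = 1).

Definition Omega (R : realType) (n : nat) : set 'M[R]_n :=
  [set A | doubly_stochastic A]. 
Arguments Omega : clear implicits.

Definition Jmx (R : realType) (n : nat) : 'M[R]_n := const_mx (n%:R)^-1.
Arguments Jmx : clear implicits.

(* s is the (multiset of) singular values of A: nonnegative reals whose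
   squares are exactly the eigenvalues (with algebraic multiplicity) of A^T A *)
Definition is_singular_values {R : realType} (n : nat) (A : 'M[R]_n)
  (s : 'rV[R]_n) : Prop :=
  (forall i, 0 <= s 0 i) /\
  char_poly (A^T *m A) = \prod_(i < n) ('X - ((s 0 i) ^+ 2)%:P).

Definition singular_values {R : realType} (n : nat) (A : 'M[R]_n) : 'rV[R]_n :=
  xget 0 [set s | is_singular_values A s].

Definition schatten {R : realType} (p : R) (n : nat) (A : 'M[R]_n) : R :=
  (\sum_(i < n) (singular_values A 0 i) `^ p) `^ p^-1.

Definition far_radius {R : realType} (p : R) (n : nat) (D : 'M[R]_n) : R :=
  sup [set schatten p (D - B) | B in Omega R n].

Definition cheb_radius {R : realType} (p : R) (n : nat) : R :=
  inf [set far_radius p D | D in Omega R n].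

Definition cheb_center {R : realType} (p : R) (n : nat) (D : 'M[R]_n) : Prop :=
  Omega R n D /\ far_radius p D = cheb_radius p n.

(* Main.v *)
Require Import Defs.
From mathcomp Require Import all_boot all_order all_algebra.
From mathcomp Require Import all_classical all_reals all_analysis.
From mathcomp Require Import complex spectral sesquilinear.
From mathcomp Require Import lra ring fingroup perm.
Import Order.TTheory GRing.Theory Num.Theory.
Local Open Scope ring_scope.

Lemma char_poly_conj (F : fieldType) m (V U D : 'M[F]_m) :
  V *m U = 1%:M -> char_poly (V *m D *m U) = char_poly D.
Proof.
move=> VU; rewrite /char_poly /char_poly_mx.
set Vp := map_mx polyC V; set Up := map_mx polyC U.
have VUp : Vp *m Up = 1%:M by rewrite -map_mxM VU map_mx1.
have -> : 'X%:M - map_mx polyC (V *m D *m U) =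
          Vp *m ('X%:M - map_mx polyC D) *m Up.
  rewrite !map_mxM mulmxBr mulmxBl -!mulmxA -scalar_mxC !mulmxA.
  by rewrite VUp mul1mx.
rewrite !det_mulmx mulrAC -det_mulmx VUp det1 mul1r.
done.
Qed.

Section Core.
Import Num.Def.
Variable R : realType.
Local Notation C := (R[i]).
Local Notation phi := (real_complex R).
Local Open Scope sesquilinear_scope.

Lemma conj_phi_mx m k (A : 'M[R]_(m,k)) : map_mx conjC (map_mx phi A) = map_mx phi A.
Proof. apply/matrixP=> i j; rewrite !mxE /= conj_Creal //; apply/complex_realP; eexists; reflexivity. Qed.

Variable n : nat.
Variable A : 'M[R]_n.
Let Ac := map_mx phi A.
Let M := Ac^T *m Ac.
Lemma Mtc : M ^t* = M.
Proof. by rewrite /M trmx_mul trmxK map_mxM map_trmx !conj_phi_mx. Qed.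
Lemma Mnormal : M \is normalmx.
Proof. by rewrite qualifE Mtc. Qed.
Let U := spectralmx M.
Let d := spectral_diag M.
Lemma hU : U \is unitarymx. Proof. exact: spectral_unitarymx. Qed.
Lemma eM : M = U^t* *m diag_mx d *m U.
Proof. by rewrite -invmx_unitary ?hU //; apply/orthomx_spectralP/Mnormal. Qed.
Lemma UU : U *m U^t* = 1%:M. Proof. exact/unitarymxP/hU. Qed.
Lemma UU' : U^t* *m U = 1%:M.
Proof. by rewrite -invmx_unitary ?hU // mulVmx // unitarymx_unit // hU. Qed.
Let W := U *m Ac^T.
Lemma WW : W *m W^t* = diag_mx d.
Proof.
rewrite /W trmx_mul map_mxM trmxK map_trmx conj_phi_mx.
rewrite mulmxA -(mulmxA U).
have -> : A ^t phi *m map_mx phi A = M by rewrite /M /Ac map_trmx.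
by rewrite eM !mulmxA UU mul1mx -mulmxA UU mulmx1.
Qed.

Lemma d_dot i : d 0 i = dotmx (row i W) (row i W).
Proof.
rewrite dotmxE; have /matrixP/(_ i i) := WW; rewrite !mxE eqxx mulr1n => <-.
by apply: eq_bigr => k _; rewrite !mxE.
Qed.
Lemma d_ge0 i : 0 <= d 0 i.
Proof. by rewrite d_dot; apply: dnorm_ge0. Qed.
Let e := \row_i complex.Re (d 0 i).
Lemma de i : d 0 i = phi (e 0 i).
Proof. by rewrite mxE RRe_real // ger0_real // d_ge0. Qed.
Lemma e_ge0 i : 0 <= e 0 i.
Proof. by rewrite -ler0c -de d_ge0. Qed.
Lemma trE : phi (\tr A) = \sum_i dotmx (row i W) (row i U).
Proof.
rewrite -trace_map_mx -/Ac -mxtrace_tr.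
have -> : \tr Ac^T = \tr (W *m U^t*).
  by rewrite /W mxtrace_mulC mulmxA mxtrace_mulC mulmxA -mulmxA UU' mulmx1.
rewrite /mxtrace; apply: eq_bigr => i _; rewrite dotmxE !mxE.
by apply: eq_bigr => k _; rewrite !mxE.
Qed.
Lemma CS i : `|dotmx (row i W) (row i U)| ^+ 2 <= d 0 i.
Proof.
have h1 : dotmx (row i U) (row i U) = 1.
  by have := (row_unitarymxP hU) i i; rewrite eqxx.
have H : `|dotmx (row i W) (row i U)| ^+ 2 <=
   dotmx (row i W) (row i W) * dotmx (row i U) (row i U) :=
  (CauchySchwarz (dotmx (n:=n)) (row i W) (row i U)).1.
by rewrite -d_dot h1 mulr1 in H.
Qed.

Lemma core : exists e : 'rV[R]_n, (forall i, 0 <= e 0 i) /\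
  char_poly (A^T *m A) = \prod_i ('X - (e 0 i)%:P) /\
  \tr A <= \sum_i Num.sqrt (e 0 i).
Proof.
exists e; split; first exact: e_ge0.
split.
  apply: (@map_poly_inj _ _ phi); rewrite map_char_poly.
  have -> : map_mx phi (A^T *m A) = M by rewrite /M /Ac map_mxM map_trmx.
  rewrite eM char_poly_conj ?UU' // char_poly_trig ?diag_mx_is_trig //.
  rewrite rmorph_prod; apply: eq_bigr => i _.
  by rewrite mxE eqxx mulr1n de; exact/esym/map_polyXsubC.
have ReD : {morph (@complex.Re R) : x y / x + y} by move=> [a b] [c d'].
have := congr1 (@complex.Re R) trE => /= ->.
rewrite (big_morph _ ReD (erefl : complex.Re (0 : R[i]) = 0)).
apply: ler_sum => i _.
have := CS i; rewrite -add_Re2_Im2 de lecR => H.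
apply: (le_trans (ler_norm _)); rewrite -sqrtr_sqr; apply: ler_wsqrtr.
by apply: le_trans H; rewrite lerDl sqr_ge0.
Qed.
End Core.

Section SV.
Variable R : realType.
Variable n : nat.

Lemma sv_exists (A : 'M[R]_n) : exists s, is_singular_values A s.
Proof.
have [e [e0 [ce _]]] := @core R n A.
exists (\row_i Num.sqrt (e 0 i)); split.
  by move=> i; rewrite mxE sqrtr_ge0.
by rewrite ce; apply: eq_bigr => i _; rewrite mxE sqr_sqrtr.
Qed.

Lemma sv_trace (A : 'M[R]_n) s : is_singular_values A s ->
  \tr A <= \sum_i s 0 i.
Proof.
move=> [s0 cs]; have [e [e0 [ce tr]]] := @core R n A.
apply: (le_trans tr); rewrite le_eqVlt; apply/orP; left; apply/eqP.
have : \prod_(x <- [seq (s 0 i)^+2 | i <- enum 'I_n]) ('X - x%:P) =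
       \prod_(x <- [seq e 0 i | i <- enum 'I_n]) ('X - x%:P).
  rewrite !big_map; exact: (etrans (esym cs) ce).
move/prod_XsubC_eq => pe.
have -> : \sum_i s 0 i = \sum_(x <- [seq (s 0 i)^+2 | i <- enum 'I_n]) Num.sqrt x.
  rewrite big_map big_enum /=; apply: eq_bigr => i _.
  by rewrite sqrtr_sqr ger0_norm.
rewrite (perm_big _ pe) big_map big_enum /=; by apply: eq_bigl.
Qed.
End SV.


Section Real.
Variable R : realType.
Variable n : nat.
Hypothesis n0 : (0 < n)%N.

Definition normsq (v : 'rV[R]_n) := \sum_j v 0 j ^+ 2.

Lemma normsq_ge0 v : 0 <= normsq v.
Proof. by apply: sumr_ge0 => j _; apply: sqr_ge0. Qed.

Lemma normsq_gt0 v : v != 0 -> 0 < normsq v.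
Proof.
move=> vN0; rewrite lt_def normsq_ge0 andbT; apply: contra vN0 => /eqP h.
apply/eqP/rowP => j; rewrite mxE.
have := @psumr_eq0P _ _ xpredT (fun j => v 0 j ^+ 2) (fun j _ => sqr_ge0 (v 0 j)) h j isT.
by move/eqP; rewrite sqrf_eq0 => /eqP.
Qed.

Lemma mul_tr00 (w : 'rV[R]_n) : (w *m w^T) 0 0 = normsq w.
Proof. by rewrite mxE; apply: eq_bigr => j _; rewrite mxE expr2. Qed.

Lemma sv_root (X : 'M[R]_n) s i : is_singular_values X s ->
  root (char_poly (X^T *m X)) (s 0 i ^+ 2).
Proof.
move=> [_ ->]; rewrite /root horner_prod; apply/eqP.
by rewrite (bigD1 i) //= hornerXsubC subrr mul0r.
Qed.

Lemma eig_bound (X : 'M[R]_n) K s : is_singular_values X s ->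
  (forall v, normsq (v *m X^T) <= K * normsq v) -> forall i, s 0 i ^+ 2 <= K.
Proof.
move=> hs hK i; have := sv_root X s i hs; rewrite -eigenvalue_root_char.
move=> /eigenvalueP [v hv vN0].
have e1 : (v *m (X^T *m X) *m v^T) 0 0 = s 0 i ^+ 2 * normsq v.
  by rewrite hv -scalemxAl mxE mul_tr00.
have e2 : (v *m (X^T *m X) *m v^T) 0 0 = normsq (v *m X^T).
  rewrite mulmxA -mulmxA.
  have -> : X *m v^T = (v *m X^T)^T by rewrite trmx_mul trmxK.
  by rewrite mul_tr00.
have := hK v; rewrite -e2 e1 => h.
by rewrite -(ler_pM2r (normsq_gt0 _ vN0)).
Qed.

Lemma sv_zero (X : 'M[R]_n) s : is_singular_values X s ->
  (forall i, \sum_j X i j = 0) -> exists i, s 0 i = 0.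
Proof.
move=> [_ cs] hX.
have : eigenvalue (X^T *m X) 0.
  apply/eigenvalueP; exists (const_mx 1 : 'rV[R]_n).
    rewrite scale0r mulmxA.
    have -> : (const_mx 1 : 'rV[R]_n) *m X^T = 0.
      apply/rowP => j; rewrite !mxE; apply: etrans (hX j); by apply: eq_bigr => k _; rewrite !mxE mul1r.
    by rewrite mul0mx.
  apply/eqP => /matrixP /(_ 0 (Ordinal n0)); rewrite !mxE => /eqP; by rewrite oner_eq0.
rewrite eigenvalue_root_char cs /root horner_prod => /prodf_eq0 [i _].
by rewrite hornerXsubC sub0r oppr_eq0 sqrf_eq0 => /eqP h; exists i.
Qed.


Lemma vmxE (v : 'rV[R]_n) (B : 'M[R]_n) i :
  (v *m B^T) 0 i = \sum_j v 0 j * B i j.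
Proof. by rewrite mxE; apply: eq_bigr => j _; rewrite mxE. Qed.

Lemma ds_row (B : 'M[R]_n) (v : 'rV[R]_n) i : doubly_stochastic B ->
  (\sum_j v 0 j * B i j) ^+ 2 <= \sum_j B i j * v 0 j ^+ 2.
Proof.
move=> [B0 [Br Bc]].
set m := \sum_j v 0 j * B i j.
have h : \sum_j B i j * (v 0 j - m) ^+ 2 = \sum_j B i j * v 0 j ^+ 2 - m ^+ 2.
  rewrite (eq_bigr (fun j => B i j * v 0 j ^+ 2 - (m *+ 2) * (v 0 j * B i j)
     + m ^+ 2 * B i j)); last by move=> j _; ring.
  rewrite big_split /= sumrB -!mulr_sumr Br -/m; ring.
have : 0 <= \sum_j B i j * (v 0 j - m) ^+ 2.
  by apply: sumr_ge0 => j _; apply: mulr_ge0; [exact: B0 | exact: sqr_ge0].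
by rewrite h subr_ge0.
Qed.

Lemma ds_contract (B : 'M[R]_n) (v : 'rV[R]_n) : doubly_stochastic B ->
  normsq (v *m B^T) <= normsq v.
Proof.
move=> hB; have [B0 [Br Bc]] := hB.
rewrite /normsq.
apply: (le_trans (y := \sum_i \sum_j B i j * v 0 j ^+ 2)).
  by apply: ler_sum => i _; rewrite vmxE; apply: ds_row.
rewrite exchange_big /= le_eqVlt; apply/orP; left; apply/eqP.
by apply: eq_bigr => j _; rewrite -mulr_suml Bc mul1r.
Qed.

Lemma JB_contract (B : 'M[R]_n) (v : 'rV[R]_n) : doubly_stochastic B ->
  normsq (v *m (Jmx R n - B)^T) <= normsq v.
Proof.
move=> hB; have [B0 [Br Bc]] := hB.
apply: (le_trans _ (ds_contract B v hB)).
set S := \sum_j v 0 j.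
set a := S / n%:R.
have nN0 : n%:R != 0 :> R by rewrite pnatr_eq0 -lt0n.
have han : a * n%:R = S by rewrite /a divfK.
have e : forall i, (v *m (Jmx R n - B)^T) 0 i = a - (v *m B^T) 0 i.
  move=> i; rewrite !vmxE.
  rewrite (eq_bigr (fun j => v 0 j * (n%:R)^-1 - v 0 j * B i j)); last first.
    by move=> j _; rewrite !mxE mulrBr.
  by rewrite sumrB -mulr_suml.
have hs : \sum_i (v *m B^T) 0 i = S.
  rewrite (eq_bigr _ (fun i _ => vmxE v B i)) exchange_big /=.
  by apply: eq_bigr => j _; rewrite -mulr_sumr Bc mulr1.
rewrite /normsq (eq_bigr _ (fun i _ => congr1 (fun x => x ^+ 2) (e i))).
rewrite (eq_bigr (fun i => (v *m B^T) 0 i ^+ 2 - (a *+ 2) * (v *m B^T) 0 i + a ^+ 2));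
  last by move=> i _; ring.
rewrite big_split /= sumrB -mulr_sumr hs sumr_const card_ord.
rewrite -addrA gerDl -mulr_natr -han mulr2n.
have : 0 <= n%:R :> R by [].
nra.
Qed.

Lemma DB_contract (D B : 'M[R]_n) (v : 'rV[R]_n) : doubly_stochastic D ->
  doubly_stochastic B -> normsq (v *m (D - B)^T) <= 4 * normsq v.
Proof.
move=> hD hB.
have e : forall i, (v *m (D - B)^T) 0 i = (v *m D^T) 0 i - (v *m B^T) 0 i.
  by move=> i; rewrite linearB /= mulmxBr !mxE.
apply: (le_trans (y := 2 * normsq (v *m D^T) + 2 * normsq (v *m B^T))).
  rewrite /normsq !mulr_sumr -big_split /=; apply: ler_sum => i _.
  rewrite e; set x := (v *m D^T) 0 i; set y := (v *m B^T) 0 i.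
  have : 0 <= (x + y) ^+ 2 by exact: sqr_ge0.
  nra.
have := ds_contract D v hD; have := ds_contract B v hB; lra.
Qed.

Lemma bern (x p : R) : 0 <= x -> 1 <= p -> 1 + p * (x - 1) <= x `^ p.
Proof.
move=> x0 p1.
have [->|pN1] := eqVneq p 1.
  by rewrite powRr1 // mul1r addrC subrK.
have p1' : 1 < p by rewrite lt_neqAle eq_sym pN1.
have p0 : 0 < p by lra.
set q := p / (p - 1).
have q0 : 0 < q by rewrite /q divr_gt0 // subr_gt0.
have pq : p^-1 + q^-1 = 1.
  rewrite /q invf_div; field; lra.
have := conjugate_powR x0 ler01 p0 q0 pq.
rewrite mulr1 powR1 /q invf_div.
move=> h.
have h2 : p * x <= x `^ p + (p - 1).
  have := ler_pM2l p0; move=> H; rewrite -H in h.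
  apply: (le_trans h).
  have -> : p * (x `^ p / p + 1 * ((p - 1) / p)) = x `^ p + (p - 1).
    by field; lra.
  exact: lexx.
lra.
Qed.
End Real.

Section Comb.
Variable R : realType.
Variable n' : nat.
Local Notation n := n'.+1.
Variable D : 'M[R]_n.
Hypothesis hD : doubly_stochastic D.

Definition tsum (s : 'S_n) := \sum_i D (s i) i.

Definition sh (k : 'I_n) : 'S_n := perm (@addrI _ k).

Lemma tsum_shift (s : 'S_n) : \sum_k tsum (s * sh k)%g = n%:R.
Proof.
have [D0 [Dr Dc]] := hD.
rewrite /tsum exchange_big /=.
rewrite (eq_bigr (fun _ => 1)); last first.
  move=> i _; rewrite -(Dc i).
  rewrite [RHS](reindex_inj (addIr (s i))) /=.
  by apply: eq_bigr => k _; rewrite permM permE.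
by rewrite sumr_const card_ord.
Qed.

Lemma tsum_one : (forall s, 1 <= tsum s) -> forall s, tsum s = 1.
Proof.
move=> h s.
have tot : \sum_k (tsum (s * sh k)%g - 1) = 0.
  by rewrite sumrB tsum_shift sumr_const card_ord subrr.
have hp : forall k : 'I_n, xpredT k -> 0 <= tsum (s * sh k)%g - 1.
  by move=> k _; rewrite subr_ge0; exact: h.
have := @psumr_eq0P _ _ xpredT (fun k => tsum (s * sh k)%g - 1) hp tot 0 isT.
move/eqP; rewrite subr_eq0 => /eqP <-.
by apply: eq_bigr => i _; rewrite permM permE add0r.
Qed.

Lemma four (s : 'S_n) a b : a != b -> (forall s, tsum s = 1) ->
  D (s b) a + D (s a) b = D (s a) a + D (s b) b.
Proof.
move=> ab h; have h1 := h s; have h2 := h (tperm a b * s)%g.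
rewrite /tsum (bigD1 a) //= (bigD1 b) //= in h1; last by rewrite eq_sym.
rewrite /tsum (bigD1 a) //= (bigD1 b) //= in h2; last by rewrite eq_sym.
rewrite !permM tpermL tpermR in h2.
have e : \sum_(i | (i != a) && (i != b)) D ((tperm a b * s)%g i) i =
         \sum_(i | (i != a) && (i != b)) D (s i) i.
  apply: eq_bigr => i /andP [ia ib]; rewrite permM tpermD // eq_sym //.
rewrite e in h2.
lra.
Qed.

Lemma cross : (forall s, tsum s = 1) -> forall r1 r2 c1 c2,
  D r1 c1 + D r2 c2 = D r2 c1 + D r1 c2.
Proof.
move=> h r1 r2 c1 c2.
have [->|r12] := eqVneq r1 r2; first by rewrite addrC.
have [->|c12] := eqVneq c1 c2; first by rewrite addrC.
pose y := tperm c1 r1 c2.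
pose s := (tperm c1 r1 * tperm y r2)%g.
have yr1 : y != r1.
  by rewrite /y -[X in _ != X](tpermL c1 r1) (inj_eq (can_inj (tpermK c1 r1))) eq_sym.
have s1 : s c1 = r1 by rewrite /s permM tpermL tpermD // eq_sym.
have s2 : s c2 = r2 by rewrite /s permM -/y tpermL.
have := four s c1 c2 c12 h; rewrite s1 s2 => ->.
by rewrite addrC.
Qed.

Lemma comb_J : (forall s, 1 <= tsum s) -> D = Jmx R n.
Proof.
move=> h; have h1 := tsum_one h; have hc := cross h1.
have [D0 [Dr Dc]] := hD.
apply/matrixP => r c; rewrite mxE.
have S : \sum_(r2 < n) \sum_(c2 < n) (D r c + D r2 c2) =
         \sum_(r2 < n) \sum_(c2 < n) (D r2 c + D r c2).
  by apply: eq_bigr => r2 _; apply: eq_bigr => c2 _; apply: hc.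
set N := (n%:R : R).
have L : \sum_(r2 < n) \sum_(c2 < n) (D r c + D r2 c2) = (D r c * N + 1) * N.
  rewrite (eq_bigr (fun _ => D r c * N + 1)); last first.
    by move=> r2 _; rewrite big_split /= sumr_const card_ord Dr mulr_natr.
  by rewrite sumr_const card_ord -mulr_natr.
have Rr : \sum_(r2 < n) \sum_(c2 < n) (D r2 c + D r c2) = N + N.
  rewrite (eq_bigr (fun r2 => D r2 c * N + 1)); last first.
    by move=> r2 _; rewrite big_split /= sumr_const card_ord Dr mulr_natr.
  by rewrite big_split /= -mulr_suml Dc mul1r sumr_const card_ord.
rewrite L Rr in S.
have N0 : 0 < N by rewrite /N ltr0n.
have e : D r c * N = 1 by nra.
by apply: (mulIf (lt0r_neq0 N0)); rewrite e mulVf // lt0r_neq0.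
Qed.
End Comb.

Local Open Scope classical_set_scope.

Lemma ex_perm (R : realType) (n : nat) (D : 'M[R]_n) : (0 < n)%N ->
  doubly_stochastic D -> D <> Jmx R n -> exists sg : 'S_n, \sum_i D (sg i) i < 1.
Proof.
case: n D => [//|n'] D _ hD hJ.
case: (pselect (exists sg : 'S_n'.+1, \sum_i D (sg i) i < 1)) => // h.
exfalso; apply: hJ; apply: (@comb_J R n' D hD) => sg; rewrite leNgt; apply/negP => hs.
by apply: h; exists sg.
Qed.

Section Main.
Variable R : realType.
Variable n : nat.
Hypothesis n0 : (0 < n)%N.
Variable p : R.
Hypothesis p1 : 1 <= p.

Let p0 : 0 < p. Proof. exact: (lt_le_trans ltr01 p1). Qed.

Lemma svP (X : 'M[R]_n) : is_singular_values X (singular_values X).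
Proof.
have h := @xgetPex _ (0 : 'rV[R]_n) [set s | is_singular_values X s] (@sv_exists R n X).
exact: h.
Qed.

Lemma perm_mx_entry (s : 'S_n) i j : (perm_mx s : 'M[R]_n) i j = (s i == j)%:R.
Proof. by rewrite perm_mxEsub !mxE. Qed.

Lemma perm_ds (s : 'S_n) : doubly_stochastic (perm_mx s : 'M[R]_n).
Proof.
split; first by move=> i j; rewrite perm_mx_entry ler0n.
split.
  move=> i; rewrite (bigD1 (s i)) //= big1 ?perm_mx_entry ?eqxx ?addr0 //.
  by move=> j /negbTE; rewrite perm_mx_entry eq_sym => ->.
move=> j; rewrite (bigD1 ((s^-1)%g j)) //= big1 ?perm_mx_entry ?permKV ?eqxx ?addr0 //.
move=> i hi; rewrite perm_mx_entry; case: eqP => // h; move: hi.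
by rewrite -h permK eqxx.
Qed.

Lemma J_ds : doubly_stochastic (Jmx R n).
Proof.
have nN0 : n%:R != 0 :> R by rewrite pnatr_eq0 -lt0n.
have hs : \sum_(j < n) (n%:R : R)^-1 = 1.
  rewrite sumr_const card_ord.
  have -> : (n%:R:R)^-1 *+ n = n%:R * n%:R^-1 by rewrite mulr_natl.
  by rewrite mulfV.
split; first by move=> i j; rewrite mxE invr_ge0 ler0n.
split.
  by move=> i; rewrite -[RHS]hs; apply: eq_bigr => j _; rewrite mxE.
by move=> i; rewrite -[RHS]hs; apply: eq_bigr => j _; rewrite mxE.
Qed.

Lemma rowsum0 (D B : 'M[R]_n) : doubly_stochastic D -> doubly_stochastic B ->
  forall i, \sum_j (D - B) i j = 0.
Proof.
move=> [_ [hD _]] [_ [hB _]] i.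
rewrite (eq_bigr (fun j => D i j - B i j)) ?sumrB ?hD ?hB ?subrr // => j _.
by rewrite !mxE.
Qed.

Lemma card_C1 (i0 : 'I_n) : \sum_(i | i != i0) (1 : R) = (n.-1)%:R.
Proof.
have h : \sum_(i < n) (1:R) = 1 + \sum_(i | i != i0) 1 by rewrite (bigD1 i0).
rewrite sumr_const card_ord in h.
have : (n%:R : R) = (n.-1)%:R + 1 by rewrite natr1 prednK.
lra.
Qed.


Lemma sum_upper (B : 'M[R]_n) : doubly_stochastic B ->
  \sum_i (singular_values (Jmx R n - B) 0 i) `^ p <= (n.-1)%:R.
Proof.
move=> hB; have hs := svP (Jmx R n - B).
set s := singular_values _ in hs *; have [s0 _] := hs.
have s1 : forall i, s 0 i <= 1.
  move=> i; rewrite -(expr_le1 (n:=2)) //.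
  apply: (@eig_bound R n _ 1 _ hs _ i) => v; rewrite mul1r; exact: JB_contract.
have [i0 hi0] := @sv_zero R n n0 _ _ hs (rowsum0 (Jmx R n) B J_ds hB).
rewrite (bigD1 i0) //= hi0 powR0 ?gt_eqF // add0r.
rewrite -(card_C1 i0); apply: ler_sum => i _.
have := s0 i; rewrite le_eqVlt => /predU1P [<-|h]; first by rewrite powR0 ?gt_eqF.
apply: (le_trans (ge1r_powR _ p1)); first by rewrite h s1.
exact: s1.
Qed.

Lemma sum_lower (D : 'M[R]_n) (sg : 'S_n) : doubly_stochastic D ->
  (n.-1)%:R + p * (1 - \sum_i D (sg i) i) <=
  \sum_i (singular_values (D - (perm_mx sg)^T) 0 i) `^ p.
Proof.
move=> hD.
set B := (perm_mx sg)^T.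
have hB : doubly_stochastic B by rewrite /B tr_perm_mx; apply: perm_ds.
have hs := svP (D - B).
set s := singular_values _ in hs *; have [s0 cs] := hs.
set Q : 'M[R]_n := perm_mx sg.
have QtQ : Q^T *m Q = 1%:M by rewrite /Q tr_perm_mx -perm_mxM mulVg perm_mx1.
have QQt : Q *m Q^T = 1%:M by rewrite /Q tr_perm_mx -perm_mxM mulgV perm_mx1.
set A' := Q *m (B - D).
have hs' : is_singular_values A' s.
  split => //; rewrite -cs; congr char_poly.
  rewrite /A' trmx_mul -mulmxA (mulmxA Q^T) QtQ mul1mx.
  rewrite -opprB mulmxN.
  have -> : (- (D - B))^T = - (D - B)^T by apply/matrixP => a b; rewrite !mxE.
  by rewrite mulNmx opprK.
have htr : \tr A' = n%:R - \sum_i D (sg i) i.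
  rewrite /A' mulmxBr /B QQt linearB /= mxtrace1; congr (_ - _).
  rewrite /mxtrace; apply: eq_bigr => i _; rewrite mxE (bigD1 (sg i)) //=.
  rewrite perm_mx_entry eqxx mul1r big1 ?addr0 // => k hk.
  by rewrite perm_mx_entry eq_sym (negbTE hk) mul0r.
have Hs : n%:R - \sum_i D (sg i) i <= \sum_i s 0 i.
  by rewrite -htr; exact: (@sv_trace R n A' s hs').
have [i0 hi0] := @sv_zero R n n0 _ _ hs (rowsum0 D B hD hB).
rewrite [X in _ <= X](bigD1 i0) //= hi0 powR0 ?gt_eqF // add0r.
apply: (le_trans _ (ler_sum _ (fun i _ => @bern R _ _ (s0 i) p1))).
rewrite big_split /= (card_C1 i0) -mulr_sumr sumrB (card_C1 i0).
have : \sum_i s 0 i = s 0 i0 + \sum_(i | i != i0) s 0 i by rewrite (bigD1 i0).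
rewrite hi0 add0r => hS.
have hn : (n%:R : R) = (n.-1)%:R + 1 by rewrite natr1 prednK.
rewrite hn hS in Hs.
have := ltW p0.
nra.
Qed.

Let c := (n.-1)%:R `^ p^-1.

Lemma schatten_le (X : 'M[R]_n) x : 0 <= x ->
  \sum_i (singular_values X 0 i) `^ p <= x -> schatten p X <= x `^ p^-1.
Proof.
move=> x0 h; rewrite /schatten; apply: ge0_ler_powR => //.
- by rewrite invr_ge0 ltW.
- by rewrite nnegrE sumr_ge0 // => i _; apply: powR_ge0.
Qed.

Lemma schatten_ge (X : 'M[R]_n) x : 0 <= x ->
  x <= \sum_i (singular_values X 0 i) `^ p -> x `^ p^-1 <= schatten p X.
Proof.
move=> x0 h; rewrite /schatten; apply: ge0_ler_powR => //.
- by rewrite invr_ge0 ltW.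
- by rewrite nnegrE sumr_ge0 // => i _; apply: powR_ge0.
Qed.

Lemma schatten_gt (X : 'M[R]_n) x : 0 <= x ->
  x < \sum_i (singular_values X 0 i) `^ p -> x `^ p^-1 < schatten p X.
Proof.
move=> x0 h; rewrite /schatten; apply: gt0_ltr_powR => //.
- by rewrite invr_gt0.
- by rewrite nnegrE sumr_ge0 // => i _; apply: powR_ge0.
Qed.

Lemma schatten_bound (D B : 'M[R]_n) : doubly_stochastic D -> doubly_stochastic B ->
  schatten p (D - B) <= (2 `^ p *+ n) `^ p^-1.
Proof.
move=> hD hB; apply: schatten_le; first by rewrite mulrn_wge0 // powR_ge0.
have hs := svP (D - B).
set s := singular_values _ in hs *; have [s0 _] := hs.
have -> : 2 `^ p *+ n = \sum_(i < n) 2 `^ p by rewrite sumr_const card_ord.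
apply: ler_sum => i _.
apply: ge0_ler_powR; [exact: ltW p0 | by rewrite nnegrE | by rewrite nnegrE |].
have := @eig_bound R n _ 4 _ hs (fun v => @DB_contract R n D B v hD hB) i.
have := s0 i; nra.
Qed.

Definition Sset (D : 'M[R]_n) := [set schatten p (D - B) | B in Omega R n].

Lemma Sset_sup (D : 'M[R]_n) : doubly_stochastic D -> has_sup (Sset D).
Proof.
move=> hD; split.
  by exists (schatten p (D - Jmx R n)); exists (Jmx R n) => //; exact: J_ds.
by exists ((2 `^ p *+ n) `^ p^-1) => y [B hB <-]; apply: schatten_bound.
Qed.

Lemma far_J : far_radius p (Jmx R n) = c.
Proof.
apply/eqP; rewrite eq_le; apply/andP; split.
  apply: ge_sup; first by case: (Sset_sup (Jmx R n) J_ds).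
  move=> y [B hB <-]; apply: schatten_le; first exact: ler0n.
  exact: sum_upper.
have hy : Sset (Jmx R n) (schatten p (Jmx R n - (perm_mx 1)^T)).
  by exists (perm_mx 1)^T => //; rewrite /Omega /= tr_perm_mx; apply: perm_ds.
apply: le_trans (sup_upper_bound (Sset_sup (Jmx R n) J_ds) hy).
apply: schatten_ge; first exact: ler0n.
have := sum_lower (Jmx R n) 1 J_ds.
have -> : \sum_i Jmx R n ((1 : 'S_n)%g i) i = 1.
  have [_ [hr _]] := J_ds; rewrite -(hr (Ordinal n0)).
  by apply: eq_bigr => i _; rewrite !mxE.
by rewrite subrr mulr0 addr0.
Qed.

Lemma far_gt (D : 'M[R]_n) : doubly_stochastic D -> D <> Jmx R n ->
  c < far_radius p D.
Proof.
move=> hD hJ; have [sg hsg] := @ex_perm R n D n0 hD hJ.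
have hy : Sset D (schatten p (D - (perm_mx sg)^T)).
  by exists (perm_mx sg)^T => //; rewrite /Omega /= tr_perm_mx; apply: perm_ds.
apply: lt_le_trans (sup_upper_bound (Sset_sup D hD) hy).
apply: schatten_gt; first exact: ler0n.
apply: lt_le_trans (sum_lower D sg hD).
by rewrite ltrDl mulr_gt0 // subr_gt0.
Qed.

Lemma cheb_eq : cheb_radius p n = c.
Proof.
have hE : [set far_radius p D | D in Omega R n] (far_radius p (Jmx R n)).
  by exists (Jmx R n) => //; exact: J_ds.
have hlb : lbound [set far_radius p D | D in Omega R n] c.
  move=> y [D hD <-].
  have [->|hJ] := pselect (D = Jmx R n); first by rewrite far_J.
  exact/ltW/far_gt.
apply/eqP; rewrite eq_le; apply/andP; split.
  rewrite -far_J; apply: ge_inf => //; by exists c.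
by apply: lb_le_inf => //; exists (far_radius p (Jmx R n)).
Qed.
End Main.

Theorem mainTheorem9 (R : realType) (n : nat) (p : R) :
  (0 < n)%N -> 1 <= p ->
  (forall D : 'M[R]_n, cheb_center p D <-> D = Jmx R n) /\
  cheb_radius p n = (n.-1)%:R `^ p^-1.
Proof.
move=> n0 p1; split; last exact: cheb_eq.
move=> D; split.
  move=> [hD hf]; case: (pselect (D = Jmx R n)) => // hJ.
  have := @far_gt R n n0 p p1 D hD hJ; rewrite hf cheb_eq // ltxx.
  by [].
move=> ->; split; first exact: J_ds.
by rewrite far_J // cheb_eq.
Qed.
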